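(* Let $\Delta\ge 3$ and $n\ge 3$. For every execution of the traversal procedure on $T_{n,\Delta}$, the number of edges of the output graph $G$ satisfies $$|E(G)| < \Bigl(2-\frac{1}{\Delta-1}\Bigr)n+\frac{\Delta-3}{2}.$$
   Context: Fix integers $\Delta\ge 3$ and $n\ge 3$, and put $b=\Delta-1$. The complete $\Delta$-ary tree $T_{n,\Delta}$ is the rooted tree on vertex set $\{1,\dots,n\}$ with root $1$ in which the children of a vertex $i$ are the integers $j$ with $b(i-1)+2\le j\le bi+1$ and $j\le n$ (equivalently, the parent of $j\ge 2$ is $\lfloor (j-2)/b\rfloor+1$). Thus every vertex has at most $\Delta-1$ children, all levels except possibly the last are full, and the last level is filled from the left. A leaf is a vertex other than the root having no children. Traversal procedure: start with edge set $E$ equal to the edge set of $T_{n,\Delta}$, all vertices unmarked, and $v_1=1$. For $k=1,\dots,n-1$: mark $v_k$; then (a) if $v_k\neq 1$ and the parent of $v_k$ is unmarked, let $v_{k+1}$ be the parent of $v_k$; (b) otherwise, if $v_k$ has an unmarked child, let $v_{k+1}$ be any unmarked child of $v_k$; (c) otherwise, let $v_{k+1}$ be any unmarked leaf $u$ and add the edge $\{v_k,u\}$ to $E$ (a ''jump edge''). Finally mark $v_n$ and add the edge $\{v_n,1\}$ to $E$ (if not already present). The output is the simple graph $G=(\{1,\dots,n\},E)$. An execution is any run of this procedure, i.e. any admissible sequence of choices in (b) and (c). *)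

(* Defs.v *)
From HB Require Import structures.
From mathcomp Require Import all_boot all_order all_algebra.
Set Implicit Arguments. Unset Strict Implicit. Unset Printing Implicit Defensive.

(* Complete Delta-ary tree T_{n,Delta} on vertices 1..n, root 1, b = Delta - 1. *)

Definition tparent (b j : nat) : nat := (j - 2) %/ b + 1.

Definition is_child (b n i j : nat) : bool :=
  [&& b * (i - 1) + 2 <= j, j <= b * i + 1 & j <= n].

Definition is_leaf (b n u : nat) : bool :=
  [&& 1 <= u <= n, u != 1 & ~~ has (is_child b n u) (iota 1 n)].

(* x has an unmarked child (m = list of marked vertices) *)
Definition has_unmarked_child (b n : nat) (m : seq nat) (x : nat) : bool :=
  has (fun j => is_child b n x j && (j \notin m)) (iota 1 n).

Definition case_a (b : nat) (m : seq nat) (x : nat) : bool :=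
  (x != 1) && (tparent b x \notin m).

(* case (c) applies (a jump edge is added) *)
Definition case_c (b n : nat) (m : seq nat) (x : nat) : bool :=
  ~~ case_a b m x && ~~ has_unmarked_child b n m x.

Definition step_ok (b n : nat) (m : seq nat) (x y : nat) : bool :=
  if case_a b m x then y == tparent b x
  else if has_unmarked_child b n m x then is_child b n x y && (y \notin m)
  else is_leaf b n y && (y \notin m).

(* s = [v_1; ...; v_n] is an execution of the traversal procedure;
   at step k (1-based) the marked vertices are v_1..v_k. *)
Definition execution (Delta n : nat) (s : seq nat) : bool :=
  let b := Delta.-1 in
  [&& size s == n, nth 0 s 0 == 1 &
      all (fun k => step_ok b n (take k.+1 s) (nth 0 s k) (nth 0 s k.+1))
          (iota 0 n.-1)].

Definition uedge (x y : nat) : nat * nat := (minn x y, maxn x y).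

(* raw list of edges of the output graph (possibly with repetitions) *)
Definition output_edges_raw (Delta n : nat) (s : seq nat) : seq (nat * nat) :=
  let b := Delta.-1 in
  [seq uedge (tparent b j) j | j <- iota 2 n.-1]
  ++ [seq uedge (nth 0 s k) (nth 0 s k.+1)
       | k <- iota 0 n.-1 & case_c b n (take k.+1 s) (nth 0 s k)]
  ++ [:: uedge (nth 0 s n.-1) 1].

Definition output_edges (Delta n : nat) (s : seq nat) : seq (nat * nat) :=
  undup [seq e <- output_edges_raw Delta n s | e.1 != e.2].

Definition num_edges (Delta n : nat) (s : seq nat) : nat :=
  size (output_edges Delta n s).

(* Main.v *)
Require Import Defs.
From HB Require Import structures.
From mathcomp Require Import all_boot all_order all_algebra.
Import Order.TTheory GRing.Theory Num.Theory.
From mathcomp Require Import zify lra.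
Set Implicit Arguments. Unset Strict Implicit.
Lemma child_gt b n x y : 0 < b -> is_child b n x y -> (x < y) && (2 <= y <= n).
Proof.
move=> b0 /and3P[h1 h2 h3].
have := leq_pmull (x - 1) b0. lia.
Qed.

Lemma child_parent b n x y : 0 < b -> is_child b n x y -> tparent b y = x.
Proof.
move=> b0 /and3P[h1 h2 h3]; rewrite /tparent.
have x1 : 1 <= x.
  case: x h1 h2 {h3} => //=; rewrite muln0 /=; lia.
have -> : y - 2 = (x - 1) * b + (y - 2 - (x-1) * b) by rewrite mulnC; lia.
rewrite divnMDl // divn_small; first lia.
rewrite mulnC. have : b * x = b * (x - 1) + b.
  by rewrite -{1}(subnK x1) mulnDr muln1.
lia.
Qed.

Lemma leaf_range b n u : 0 < b -> 2 <= n -> is_leaf b n u ->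
  ((n - 2) %/ b + 1 < u) && (u <= n).
Proof.
move=> b0 n2 /and3P[/andP[u1 un] _ hn]; rewrite un andbT.
rewrite ltnNge; apply/negP => hu.
move/hasPn: hn => /(_ (b * (u - 1) + 2)) hn.
have hd : b * ((n - 2) %/ b) <= n - 2 by rewrite mulnC leq_divM.
have h3 : b * (u - 1) <= b * ((n - 2) %/ b) by rewrite leq_mul2l; apply/orP; right; lia.
have hb : b * u = b * (u - 1) + b by rewrite -{1}(subnK u1) mulnDr muln1.
have : b * (u - 1) + 2 \in iota 1 n.
  rewrite mem_iota; move: hd h3 hb; set q := b * ((n - 2) %/ b); set w := b * (u-1); lia.
move/hn; rewrite /is_child; apply/negP/negPn.
apply/and3P; split; move: hd h3 hb; set q := b * ((n - 2) %/ b); set w := b * (u-1); lia.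
Qed.

Lemma p_bound b n : 0 < b -> 2 <= n -> n - 1 <= b * ((n - 2) %/ b + 1).
Proof.
move=> b0 n2; have := ltn_ceil (n - 2) b0. rewrite mulnC addn1. lia.
Qed.
Lemma step_fresh b n m x y : step_ok b n m x y -> y \notin m.
Proof.
rewrite /step_ok /case_a; case: ifP => [/andP[_ h] /eqP -> //|_].
by case: ifP => _ /andP[].
Qed.

Lemma step_c b n m x y : case_c b n m x -> step_ok b n m x y -> is_leaf b n y.
Proof.
rewrite /case_c /step_ok => /andP[/negbTE -> /negbTE ->]; by case/andP.
Qed.

Lemma s_uniq b n s : size s = n -> 0 < n ->
  (forall k, k < n.-1 -> step_ok b n (take k.+1 s) (nth 0 s k) (nth 0 s k.+1)) ->
  uniq s.
Proof.
move=> hs n0 hstep.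
suff H : forall k, k <= n -> uniq (take k s) by rewrite -(take_size s) H ?hs.
elim=> [|k IH] hk; first by rewrite take0.
rewrite (take_nth 0) ?hs // rcons_uniq IH ?andbT; last lia.
case: k {IH} hk => [|k] hk; first by rewrite take0.
have hk' : k < n.-1 by lia.
exact: (step_fresh (hstep k hk')).
Qed.

Lemma path_inv b n s : 0 < b -> size s = n -> nth 0 s 0 = 1 ->
  (forall k, k < n.-1 -> step_ok b n (take k.+1 s) (nth 0 s k) (nth 0 s k.+1)) ->
  forall k, k < n -> (forall i, i < k -> ~~ case_c b n (take i.+1 s) (nth 0 s i)) ->
  (forall i, i < k -> is_child b n (nth 0 s i) (nth 0 s i.+1))
  /\ all (fun x => x <= nth 0 s k) (take k.+1 s).
Proof.
move=> b0 hs h0 hstep; elim=> [|k IH] hk hnj.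
  split => //; rewrite (take_nth 0) ?hs // take0 /= leqnn //.
have [IH1 IH2] := IH (ltnW hk) (fun i hi => hnj i (ltnW hi)).
have hk' : k < n.-1 by lia.
have hst := hstep k hk'.
have hca : ~~ case_a b (take k.+1 s) (nth 0 s k).
  rewrite /case_a; case: (posnP k) => [->|kpos]; first by rewrite h0.
  have hk1 : k.-1 < k by lia.
  have hc := IH1 k.-1 hk1; rewrite prednK // in hc.
  rewrite (child_parent b0 hc); apply/nandP; right; rewrite negbK.
  rewrite (take_nth 0) ?hs; last lia.
  rewrite -{2}(prednK kpos) (take_nth 0) ?hs; last lia.
  by rewrite mem_rcons in_cons mem_rcons in_cons eqxx orbT.
have hchild : is_child b n (nth 0 s k) (nth 0 s k.+1).
  have := hnj k (ltnSn k); rewrite /case_c hca /= negbK => hu.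
  by move: hst; rewrite /step_ok (negbTE hca) hu => /andP[].
split.
  move=> i; rewrite ltnS leq_eqVlt; case/orP => [/eqP -> //|]; exact: IH1.
rewrite (take_nth 0 (n:=k.+1)) ?hs // all_rcons leqnn /=.
apply: sub_all IH2 => x /= hx; have := child_gt b0 hchild; lia.
Qed.

Lemma jumps_bound b n s : 0 < b -> 3 <= n -> size s = n -> nth 0 s 0 = 1 ->
  (forall k, k < n.-1 -> step_ok b n (take k.+1 s) (nth 0 s k) (nth 0 s k.+1)) ->
  size [seq k <- iota 0 n.-1 | case_c b n (take k.+1 s) (nth 0 s k)] + 1
    <= n - ((n - 2) %/ b + 1).
Proof.
move=> b0 n3 hs h0 hstep.
set P := fun k => case_c b n (take k.+1 s) (nth 0 s k).
set J := [seq k <- iota 0 n.-1 | P k].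
set p := (n - 2) %/ b + 1.
have hu := s_uniq hs (ltnW (ltnW n3)) hstep.
have hp : p < n by have := leq_div (n - 2) b; rewrite /p; lia.
have Tleaf : forall j, j \in J -> is_leaf b n (nth 0 s j.+1) && (j < n.-1).
  move=> j; rewrite mem_filter mem_iota => /andP[hPj hj].
  have hj' : j < n.-1 by lia.
  by rewrite hj' andbT (step_c hPj (hstep j hj')).
set T := [seq nth 0 s j.+1 | j <- J].
have Tuniq : uniq T.
  rewrite map_inj_in_uniq ?filter_uniq ?iota_uniq //.
  move=> i j /Tleaf/andP[_ hi] /Tleaf/andP[_ hj] /eqP.
  rewrite nth_uniq ?hs //; lia.
have hsJ : size J = size T by rewrite size_map.
case: (boolP (has P (iota 0 n.-1))) => hh; last first.
  move: hh; rewrite has_filter negbK => /eqP HJ. rewrite -/J in HJ; rewrite HJ /=; lia.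
set k := find P (iota 0 n.-1).
have hkn : k < n.-1 by move: hh; rewrite has_find size_iota.
have hPk : P k by have := nth_find 0 hh; rewrite nth_iota.
have hbefore : forall i, i < k -> ~~ P i.
  move=> i hi; have := before_find 0 hi; rewrite nth_iota ?add0n => [->//|]; lia.
have hkn' : k < n by lia.
have [hpath hall] := path_inv b0 hs h0 hstep hkn' hbefore.
have k0 : 0 < k.
  case: (posnP k) => // k0; move: hPk; rewrite k0 /P /case_c.
  rewrite (take_nth 0) ?hs ?take0 ?h0 /=; last lia.
  move/negP => H; exfalso; apply: H; apply/hasP; exists 2.
    rewrite mem_iota; lia.
  rewrite /is_child muln0 muln1 /=; apply/andP; split => //; lia.
have hk1 : k.-1 < k by lia.
have hc := hpath k.-1 hk1; rewrite prednK // in hc.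
have hleaf : is_leaf b n (nth 0 s k).
  have := child_gt b0 hc => /andP[_ /andP[h2 hn]].
  apply/and3P; split; first (apply/andP; split; lia).
    apply/eqP; lia.
  apply/negP => /hasP[y yin hy].
  move: hPk; rewrite /P /case_c => /andP[_ /negP]; apply; apply/hasP; exists y => //.
  rewrite hy /=; apply/negP => ym; have := allP hall y ym.
  have := child_gt b0 hy; lia.
have : size (nth 0 s k :: T) <= size (iota p.+1 (n - p)).
  apply: uniq_leq_size.
    rewrite /= Tuniq andbT; apply/mapP => [[j jJ hj]].
    have := Tleaf j jJ => /andP[_ hjn].
    have hjk : k <= j.
      rewrite leqNgt; apply/negP => hjk; have := hbefore j hjk.
      by move: jJ; rewrite mem_filter => /andP[-> _].
    move/eqP: hj; rewrite nth_uniq ?hs //; lia.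
  move=> x; rewrite in_cons => /orP[/eqP ->|/mapP[j /Tleaf/andP[hl _] ->]].
    have := leaf_range b0 (ltnW n3) hleaf; rewrite mem_iota -/p; lia.
  have := leaf_range b0 (ltnW n3) hl; rewrite mem_iota -/p; lia.
rewrite /= size_iota -hsJ; lia.
Qed.
Local Open Scope ring_scope.

Lemma final_arith (b n p E : nat) : (2 <= b)%N -> (n <= b * p + 1)%N -> (E + p + 1 <= 2 * n)%N ->
  E%:R < (2 - 1 / ((b.+1)%:R - 1)) * n%:R + ((b.+1)%:R - 3) / 2 :> rat.
Proof.
move=> b2 h1 h2.
have -> : (b.+1)%:R - 1 = b%:R :> rat by rewrite -natr1 addrK.
have hB : 2 <= b%:R :> rat by rewrite ler_nat.
have hB0 : 0 < b%:R :> rat by lra.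
move: h1 h2; rewrite -!(ler_nat rat) !natrD !natrM => h1 h2.
have hx : 1 / b%:R * n%:R <= p%:R + 1/2 :> rat.
  rewrite div1r ler_pdivrMl //. nra.
have e : (b.+1)%:R = b%:R + 1 :> rat by rewrite natr1.
rewrite e mulrBl. lra.
Qed.

Theorem mainTheorem3 (Delta n : nat) (s : seq nat) :
  (3 <= Delta)%N -> (3 <= n)%N -> execution Delta n s ->
  (num_edges Delta n s)%:R
    < (2 - 1 / (Delta%:R - 1)) * n%:R + (Delta%:R - 3) / 2 :> rat.
Proof.
case: Delta => [|b] // D3 n3 /and3P[/eqP hs /eqP h0 /allP hall].
have b2 : (2 <= b)%N by lia.
have b0 : (0 < b)%N by lia.
have hstep : forall k, (k < n.-1)%N ->
    step_ok b n (take k.+1 s) (nth 0 s k) (nth 0 s k.+1).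
  by move=> k hk; apply: hall; rewrite mem_iota; lia.
have hJ := jumps_bound b0 n3 hs h0 hstep.
have hp := p_bound b0 (ltnW n3).
have hE : (num_edges b.+1 n s <= n.-1 +
   size [seq k <- iota 0 n.-1 | case_c b n (take k.+1 s) (nth 0 s k)] + 1)%N.
  rewrite /num_edges /output_edges; apply: leq_trans (size_undup _) _.
  rewrite [X in (X <= _)%N]size_filter; apply: leq_trans (count_size _ _) _.
  by rewrite /output_edges_raw !size_cat !size_map size_iota /= addnA.
move: hJ hp hE; set p := ((n - 2) %/ b + 1)%N; set J := size _; set q := (b * p)%N => hJ hp hE.
apply: (final_arith (p := p)) => //; lia.
Qed.
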